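(* Let $R$ be a finitely generated integral $\mathbb{K}$-algebra with an effective, pointed grading by a finitely generated abelian group $K$, let $(\pi,\mathrm{id}_K)\colon S=\mathbb{K}[T_1,\dots,T_r]\to R$ be a minimal presentation and $I:=\ker(\pi)$. Then every graded automorphism $(\varphi,\psi)\in\operatorname{Aut}_K(R)$ satisfies $\psi(\Omega_I)=\Omega_I$.
   Context: $\mathbb{K}$ is algebraically closed of characteristic zero. $\operatorname{Aut}_K(R)$ is the group of graded automorphisms $(\varphi,\psi)$ of $R$ ($\varphi$ algebra automorphism, $\psi\in\operatorname{Aut}(K)$, $\varphi(R_w)=R_{\psi(w)}$). Effective: the weight monoid $\omega(R)=\{w;\ R_w\ne0\}$ generates $K$; pointed: $R_0=\mathbb{K}$ and the cone in $K\otimes\mathbb{Q}$ generated by $\omega(R)$ contains no line. Minimal presentation: $K$-graded polynomial ring $S$ with homogeneous variables and graded epimorphism $(\pi,\kappa)\colon S\to R$ with $\kappa$ a group isomorphism and $\ker\pi\subseteq\langle T_1,\dots,T_r\rangle^2$. On $K$ one has the partial order $w'\le w$ iff $w-w'\in\omega(S)$ (weight monoid of $S$). For the homogeneous ideal $I$, let $I_{<w}\subseteq S$ be the ideal generated by all components $I_{w'}=I\cap S_{w'}$ with $w'<w$; the set of ideal generator degrees is $\Omega_I:=\{w\in K;\ I_w\not\subseteq I_{<w}\}$. *)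

(* Defs.v *)
From HB Require Import structures.
From mathcomp Require Import all_boot all_order all_algebra.
From mathcomp Require Import mpoly.
Set Implicit Arguments. Unset Strict Implicit. Unset Printing Implicit Defensive.
Import GRing.Theory.
Local Open Scope ring_scope.

Definition in_monoid_gen (K : zmodType) (A : K -> Prop) (u : K) : Prop :=
  exists s : seq K, (forall x, x \in s -> A x) /\ u = \sum_(x <- s) x.

Definition in_group_gen (K : zmodType) (A : K -> Prop) (u : K) : Prop :=
  exists s t : seq K, (forall x, x \in s -> A x) /\ (forall x, x \in t -> A x)
    /\ u = \sum_(x <- s) x - \sum_(x <- t) x.

Definition fingen_group (K : zmodType) : Prop :=
  exists s : seq K, forall u, in_group_gen (fun x => x \in s) u.

(* u is a torsion element, i.e. u (x) 1 = 0 in K (x) Q *)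
Definition torsion (K : zmodType) (u : K) : Prop :=
  exists n : nat, (0 < n)%N /\ u *+ n = 0.

(** * K-graded algebras; the grading is given by the homogeneous components
    G w = R_w (as predicates on R). *)
Definition is_grading (F : fieldType) (K : zmodType) (R : comAlgType F)
    (G : K -> R -> Prop) : Prop :=
  (forall w, G w 0) /\
      (forall w x y, G w x -> G w y -> G w (x + y)) /\
      (forall w (c : F) x, G w x -> G w (c *: x)) /\
      (forall w w' x y, G w x -> G w' y -> G (w + w') (x * y)) /\
      (forall x : R, exists s : seq (K * R), uniq (map fst s) /\
          (forall p, p \in s -> G p.1 p.2) /\ x = \sum_(p <- s) p.2) /\
      (forall s : seq (K * R), uniq (map fst s) ->
          (forall p, p \in s -> G p.1 p.2) -> \sum_(p <- s) p.2 = 0 ->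
          forall p, p \in s -> p.2 = 0).

Definition weight (F : fieldType) (K : zmodType) (R : comAlgType F)
    (G : K -> R -> Prop) (w : K) : Prop :=
  exists x : R, G w x /\ x != 0.

Definition effective_grading (F : fieldType) (K : zmodType) (R : comAlgType F)
    (G : K -> R -> Prop) : Prop :=
  forall k : K, in_group_gen (weight G) k.

(* pointed: R_0 = K, and the cone generated by omega(R) in K (x) Q contains
   no line.  A line in the cone is a nonzero v with v, -v in the cone; after
   clearing denominators this means: images of u, u' in the monoid generated
   by omega(R) with u + u' = 0 in K (x) Q but u <> 0 in K (x) Q. *)
Definition pointed_grading (F : fieldType) (K : zmodType) (R : comAlgType F)
    (G : K -> R -> Prop) : Prop :=
  (forall x : R, G 0 x -> exists c : F, x = c%:A) /\
  (forall u u' : K, in_monoid_gen (weight G) u -> in_monoid_gen (weight G) u' ->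
     torsion (u + u') -> torsion u).

Definition mdegK (K : zmodType) (r : nat) (q : 'I_r -> K) (m : 'X_{1..r}) : K :=
  \sum_(i < r) q i *+ m i.

Definition homogS (F : fieldType) (K : zmodType) (r : nat) (q : 'I_r -> K)
    (w : K) (p : {mpoly F[r]}) : Prop :=
  forall m, m \in msupp p -> mdegK q m = w.

Definition weightS (F : fieldType) (K : zmodType) (r : nat) (q : 'I_r -> K)
    (w : K) : Prop :=
  exists p : {mpoly F[r]}, homogS q w p /\ p != 0.

Definition leS (F : fieldType) (K : zmodType) (r : nat) (q : 'I_r -> K)
    (w' w : K) : Prop := weightS F q (w - w').
Definition ltS (F : fieldType) (K : zmodType) (r : nat) (q : 'I_r -> K)
    (w' w : K) : Prop := leS F q w' w /\ w' <> w.

Definition Icomp (F : fieldType) (K : zmodType) (r : nat) (q : 'I_r -> K)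
    (I : {mpoly F[r]} -> Prop) (w : K) (p : {mpoly F[r]}) : Prop :=
  I p /\ homogS q w p.

Definition Ilt (F : fieldType) (K : zmodType) (r : nat) (q : 'I_r -> K)
    (I : {mpoly F[r]} -> Prop) (w : K) (p : {mpoly F[r]}) : Prop :=
  exists (n : nat) (f g : 'I_n -> {mpoly F[r]}) (v : 'I_n -> K),
    (forall i, ltS F q (v i) w /\ Icomp q I (v i) (g i)) /\
    p = \sum_(i < n) f i * g i.

Definition OmegaI (F : fieldType) (K : zmodType) (r : nat) (q : 'I_r -> K)
    (I : {mpoly F[r]} -> Prop) (w : K) : Prop :=
  exists p : {mpoly F[r]}, Icomp q I w p /\ ~ Ilt q I w p.

Definition in_irrel_sq (F : fieldType) (r : nat) (p : {mpoly F[r]}) : Prop :=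
  exists g : 'I_r -> 'I_r -> {mpoly F[r]},
    p = \sum_(i < r) \sum_(j < r) 'X_i * 'X_j * g i j.

(* Main.v *)
Require Import Defs.
From HB Require Import structures.
From mathcomp Require Import all_boot all_order all_algebra.
From mathcomp Require Import mpoly.
From Stdlib Require Import IndefiniteDescription.
Import GRing.Theory.
Local Open Scope ring_scope.
Set Implicit Arguments. Unset Strict Implicit.

Section Basic.
Variables (F : fieldType) (K : zmodType) (r : nat) (q : 'I_r -> K).
Local Notation S := {mpoly F[r]}.

Lemma mdegK0 : mdegK q 0%MM = 0.
Proof. by rewrite /mdegK big1 // => i _; rewrite mnm0E mulr0n. Qed.

Lemma mdegKD m1 m2 : mdegK q (m1 + m2)%MM = mdegK q m1 + mdegK q m2.
Proof. by rewrite /mdegK -big_split /=; apply: eq_bigr => i _; rewrite mnmDE mulrnDr. Qed.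

Lemma mdegKU i : mdegK q U_(i)%MM = q i.
Proof.
rewrite /mdegK (bigD1 i) //= mnm1E eqxx mulr1n big1 ?addr0 // => j /negPf.
by rewrite mnm1E eq_sym => ->; rewrite mulr0n.
Qed.

Lemma homogSP w (p : S) : homogS q w p <-> (forall m, p@_m != 0 -> mdegK q m = w).
Proof. by split=> h m; [rewrite -mcoeff_msupp; apply: h | rewrite mcoeff_msupp; apply: h]. Qed.

Lemma homogS0 w : homogS q w (0 : S).
Proof. by apply/homogSP => m; rewrite mcoeff0 eqxx. Qed.

Lemma homogSD w (p1 p2 : S) : homogS q w p1 -> homogS q w p2 -> homogS q w (p1 + p2).
Proof.
move=> /homogSP h1 /homogSP h2; apply/homogSP => m; rewrite mcoeffD.
by case: (eqVneq p1@_m 0) => [->|/h1 //]; rewrite add0r => /h2.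
Qed.

Lemma homogSZ w c (p : S) : homogS q w p -> homogS q w (c *: p).
Proof.
move=> /homogSP h; apply/homogSP => m; rewrite mcoeffZ.
by case: (eqVneq p@_m 0) => [->|/h //]; rewrite mulr0 eqxx.
Qed.

Lemma homogSN w (p : S) : homogS q w p -> homogS q w (- p).
Proof. by move=> h; rewrite -scaleN1r; apply: homogSZ. Qed.

Lemma homogSB w (p1 p2 : S) : homogS q w p1 -> homogS q w p2 -> homogS q w (p1 - p2).
Proof. by move=> h1 h2; apply: homogSD => //; apply: homogSN. Qed.

Lemma homogSM w1 w2 (p1 p2 : S) : homogS q w1 p1 -> homogS q w2 p2 ->
  homogS q (w1 + w2) (p1 * p2).
Proof.
move=> h1 h2 m /msuppM_le /allpairsP [[m1 m2] /= [i1 i2 ->]].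
by rewrite mdegKD (h1 _ i1) (h2 _ i2).
Qed.

Lemma homogSX m : homogS q (mdegK q m) ('X_[m] : S).
Proof. by move=> m'; rewrite msuppX mem_seq1 => /eqP ->. Qed.

Lemma homogS1 : homogS q 0 (1 : S).
Proof. by rewrite -mpolyX0 -mdegK0; apply: homogSX. Qed.

Lemma homogSXn w (p : S) k : homogS q w p -> homogS q (w *+ k) (p ^+ k).
Proof.
move=> h; elim: k => [|k ih]; first by rewrite expr0 mulr0n; apply: homogS1.
by rewrite exprS mulrS; apply: homogSM.
Qed.

Lemma homogS_sum w (I : Type) (s : seq I) (P : pred I) (f : I -> S) :
  (forall i, P i -> homogS q w (f i)) -> homogS q w (\sum_(i <- s | P i) f i).
Proof. by move=> h; apply: big_ind => //; [apply: homogS0 | apply: homogSD]. Qed.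

Lemma irrel_coef (p : S) m : in_irrel_sq p -> (mdeg m < 2)%N -> p@_m = 0.
Proof.
move=> [g ->] hm; rewrite raddf_sum big1 // => i _; rewrite raddf_sum big1 // => j _.
apply/eqP; rewrite mcoeff_eq0; apply/negP.
rewrite -mpolyXD mulrC (perm_mem (msuppMX _ _)) => /mapP [m' _ em].
by move: hm; rewrite em !mdegD !mdeg1.
Qed.

End Basic.

Section Graded.
Variables (F : fieldType) (K : zmodType) (R : comAlgType F) (G : K -> R -> Prop).
Hypothesis grG : is_grading G.
Variables (r : nat) (q : 'I_r -> K) (pi : {lrmorphism {mpoly F[r]} -> R}).
Hypothesis R_integral : forall a b : R, a * b = 0 -> a = 0 \/ b = 0.
Hypothesis R_nontriv : (1 : R) != 0.
Hypothesis pi_graded : forall w p, homogS q w p -> G w (pi p).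
Hypothesis pi_minimal : forall p, pi p = 0 -> in_irrel_sq p.
Local Notation S := {mpoly F[r]}.

Lemma G0 w : G w 0. Proof. by case: grG => h _; apply: h. Qed.
Lemma GD w x y : G w x -> G w y -> G w (x + y). Proof. by case: grG => _ [h _]; apply: h. Qed.
Lemma GZ w c x : G w x -> G w (c *: x). Proof. by case: grG => _ [_ [h _]]; apply: h. Qed.
Lemma GB w x y : G w x -> G w y -> G w (x - y).
Proof. by move=> hx hy; apply: GD => //; rewrite -scaleN1r; apply: GZ. Qed.
Lemma Gdirect (s : seq (K * R)) : uniq (map fst s) ->
  (forall p, p \in s -> G p.1 p.2) -> \sum_(p <- s) p.2 = 0 ->
  forall p, p \in s -> p.2 = 0.
Proof. by case: grG => _ [_ [_ [_ [_ h]]]]; apply: h. Qed.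

Lemma mulR_neq0 (a b : R) : a != 0 -> b != 0 -> a * b != 0.
Proof. by move=> /eqP ha /eqP hb; apply/eqP => /R_integral []. Qed.

Lemma piX_neq0 i : pi 'X_i != 0.
Proof.
apply/eqP => /pi_minimal h; move: (@irrel_coef _ _ _ U_(i)%MM h).
by rewrite mdeg1 mcoeffXU eqxx => /(_ isT) /eqP; rewrite oner_eq0.
Qed.

Lemma piXm_neq0 m : pi 'X_[m] != 0.
Proof.
rewrite mpolyXE_id rmorph_prod /=.
apply: (big_ind (fun x : R => x != 0)).
- exact: R_nontriv.
- by move=> a b; apply: mulR_neq0.
move=> i _; rewrite rmorphXn /=; elim: (m i) => [|k ih]; last first.
  by rewrite exprS; apply: mulR_neq0 => //; apply: piX_neq0.
by rewrite expr0.
Qed.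

End Graded.

Section Comp.
Variables (F : fieldType) (K : zmodType) (R : comAlgType F) (G : K -> R -> Prop).
Hypothesis grG : is_grading G.
Variables (r : nat) (q : 'I_r -> K) (pi : {lrmorphism {mpoly F[r]} -> R}).
Hypothesis pi_graded : forall w p, homogS q w p -> G w (pi p).
Local Notation S := {mpoly F[r]}.

Lemma homog_comp u (p : S) y : G u y -> pi p = y ->
  exists pu, homogS q u pu /\ pi pu = y.
Proof.
move=> Gy py; subst y.
pose comp v := \sum_(m <- msupp p | mdegK q m == v) p@_m *: ('X_[m] : S).
have hcomp v : homogS q v (comp v).
  apply: homogS_sum => m /eqP <-; apply: homogSZ; apply: homogSX.
pose D := undup (u :: map (mdegK q) (msupp p)).
have uD : uniq D by apply: undup_uniq.
have hp : p = \sum_(v <- D) comp v.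
  rewrite /comp (exchange_big_dep predT) //= {1}[p]mpolyE.
  apply: eq_big_seq => m hm.
  rewrite -big_filter (@eq_in_filter _ _ (pred1 (mdegK q m))); last first.
    by move=> v _; rewrite /= eq_sym.
  rewrite filter_pred1_uniq //; first by rewrite big_seq1.
  by rewrite mem_undup in_cons; apply/orP; right; apply: map_f.
exists (comp u); split => //.
pose s := [seq (v, pi (comp v) - (if v == u then pi p else 0)) | v <- D].
have us : uniq (map fst s) by rewrite -map_comp map_id.
have Gs : forall x, x \in s -> G x.1 x.2.
  move=> x /mapP [v _ ->] /=; case: eqP => [->|_].
    exact: (GB grG (pi_graded (hcomp u)) Gy).
  by rewrite subr0; apply: pi_graded.
have s0 : \sum_(x <- s) x.2 = 0.
  rewrite big_map /= sumrB -raddf_sum /= -hp.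
  rewrite -big_mkcond /= -big_filter (@eq_in_filter _ _ (pred1 u)) //.
  rewrite filter_pred1_uniq // ?big_seq1 ?subrr //.
  by rewrite mem_undup mem_head.
have uin : (u, pi (comp u) - pi p) \in s.
  apply/mapP; exists u; first by rewrite mem_undup mem_head.
  by rewrite eqxx.
have /= := Gdirect grG us Gs s0 uin.
by move=> /eqP; rewrite subr_eq0 => /eqP.
Qed.
End Comp.

Definition isrm (F : fieldType) (A B : comAlgType F) (f : A -> B) :=
  {morph f : x y / x + y} /\ {morph f : x y / x * y} /\ f 1 = 1 /\
  (forall c x, f (c *: x) = c *: f x).

Section Isrm.
Variables (F : fieldType) (A B C : comAlgType F).

Lemma isrm0 (f : A -> B) : isrm f -> f 0 = 0.
Proof. by case=> _ [_ [_ hZ]]; rewrite -(scale0r (0 : A)) hZ scale0r. Qed.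

Lemma isrmN (f : A -> B) : isrm f -> forall x, f (- x) = - f x.
Proof. by move=> h x; case: h => _ [_ [_ hZ]]; rewrite -scaleN1r hZ scaleN1r. Qed.

Lemma isrmB (f : A -> B) : isrm f -> forall x y, f (x - y) = f x - f y.
Proof. by move=> h x y; rewrite h.1 isrmN. Qed.

Lemma isrm_sum (f : A -> B) : isrm f -> forall (I : Type) (s : seq I) (P : pred I) (g : I -> A),
  f (\sum_(i <- s | P i) g i) = \sum_(i <- s | P i) f (g i).
Proof. by move=> h I s P g; apply: (big_morph f h.1 (isrm0 h)). Qed.

Lemma isrm_prod (f : A -> B) : isrm f -> forall (I : Type) (s : seq I) (P : pred I) (g : I -> A),
  f (\prod_(i <- s | P i) g i) = \prod_(i <- s | P i) f (g i).
Proof. by move=> h I s P g; apply: (big_morph f h.2.1 h.2.2.1). Qed.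

Lemma isrmXn (f : A -> B) : isrm f -> forall x k, f (x ^+ k) = f x ^+ k.
Proof.
move=> h x; elim=> [|k ih]; first by rewrite !expr0 h.2.2.1.
by rewrite !exprS h.2.1 ih.
Qed.

Lemma isrm_comp (f : A -> B) (g : B -> C) : isrm f -> isrm g -> isrm (g \o f).
Proof.
move=> [fD [fM [f1 fZ]]] [gD [gM [g1 gZ]]]; split; [|split; [|split]] => /=.
- by move=> x y /=; rewrite fD gD.
- by move=> x y /=; rewrite fM gM.
- by rewrite f1 g1.
- by move=> c x /=; rewrite fZ gZ.
Qed.

Lemma isrm_lr (f : {lrmorphism A -> B}) : isrm f.
Proof.
split; [|split; [|split]].
- exact: rmorphD.
- exact: rmorphM.
- exact: rmorph1.
- by move=> c x; rewrite linearZ.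
Qed.

Lemma isrm_inv (f : A -> A) (g : A -> A) : isrm f -> cancel f g -> cancel g f -> isrm g.
Proof.
move=> [fD [fM [f1 fZ]]] fK gK.
have gI : injective f by apply: can_inj fK.
split; [|split; [|split]].
- by move=> x y; apply: gI; rewrite fD !gK.
- by move=> x y; apply: gI; rewrite fM !gK.
- by apply: gI; rewrite f1 gK.
- by move=> c x; apply: gI; rewrite fZ !gK.
Qed.

End Isrm.

Section Ideal.
Variables (F : fieldType) (K : zmodType) (r : nat) (q : 'I_r -> K)
  (I : {mpoly F[r]} -> Prop).
Local Notation S := {mpoly F[r]}.

Lemma Ilt0 w : Ilt q I w 0.
Proof.
exists 0%N, (fun _ => 0), (fun _ => 0), (fun _ => w); split; first by case.
by rewrite big_ord0.
Qed.

Lemma IltD w p1 p2 : Ilt q I w p1 -> Ilt q I w p2 -> Ilt q I w (p1 + p2).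
Proof.
move=> [n1 [f1 [g1 [v1 [h1 ->]]]]] [n2 [f2 [g2 [v2 [h2 ->]]]]].
pose sel (T : Type) (a : 'I_n1 -> T) (b : 'I_n2 -> T) (i : 'I_(n1 + n2)) :=
  match split i with inl j => a j | inr j => b j end.
exists (n1 + n2)%N, (sel _ f1 f2), (sel _ g1 g2), (sel _ v1 v2); split.
  by move=> i; rewrite /sel; case: (split i).
rewrite big_split_ord /= /sel; congr (_ + _); apply: eq_bigr => i _.
  by rewrite -[lshift _ _]/(unsplit (inl i)) unsplitK.
by rewrite -[rshift _ _]/(unsplit (inr i)) unsplitK.
Qed.

Lemma IltM w h p : Ilt q I w p -> Ilt q I w (h * p).
Proof.
move=> [n [f [g [v [hg ->]]]]]; exists n, (fun i => h * f i), g, v; split => //.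
by rewrite mulr_sumr; apply: eq_bigr => i _; rewrite mulrA.
Qed.

Lemma IltZ w c p : Ilt q I w p -> Ilt q I w (c *: p).
Proof. by rewrite -mul_mpolyC; apply: IltM. Qed.

Lemma IltN w p : Ilt q I w p -> Ilt q I w (- p).
Proof. by rewrite -scaleN1r; apply: IltZ. Qed.

Lemma IltB w p1 p2 : Ilt q I w p1 -> Ilt q I w p2 -> Ilt q I w (p1 - p2).
Proof. by move=> h1 h2; apply: IltD => //; apply: IltN. Qed.

Lemma Ilt_gen w v g : ltS F q v w -> Icomp q I v g -> Ilt q I w g.
Proof.
move=> hv hg; exists 1%N, (fun _ => 1), (fun _ => g), (fun _ => v); split => //.
by rewrite big_ord1 mul1r.
Qed.

Lemma Ilt_sum w (T : Type) (s : seq T) (P : pred T) (f : T -> S) :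
  (forall i, P i -> Ilt q I w (f i)) -> Ilt q I w (\sum_(i <- s | P i) f i).
Proof. by move=> h; apply: big_ind => //; [apply: Ilt0 | apply: IltD]. Qed.

Lemma Ilt_map (Phi : S -> S) (psi : K -> K) : isrm Phi ->
  (forall v w, ltS F q v w -> ltS F q (psi v) (psi w)) ->
  (forall v p, homogS q v p -> homogS q (psi v) (Phi p)) ->
  (forall p, I p -> I (Phi p)) ->
  forall w p, Ilt q I w p -> Ilt q I (psi w) (Phi p).
Proof.
move=> hPhi hlt hhom hI w p [n [f [g [v [hg ->]]]]].
exists n, (fun i => Phi (f i)), (fun i => Phi (g i)), (fun i => psi (v i)); split.
  move=> i; have [h1 [h2 h3]] := hg i; split; first exact: hlt.
  by split; [apply: hI | apply: hhom].
by rewrite (isrm_sum hPhi); apply: eq_bigr => i _; rewrite hPhi.2.1.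
Qed.

End Ideal.

Section Main.
Variables (F : fieldType) (K : zmodType) (R : comAlgType F) (G : K -> R -> Prop).
Hypothesis grG : is_grading G.
Variables (r : nat) (q : 'I_r -> K) (pi : {lrmorphism {mpoly F[r]} -> R}).
Hypothesis R_integral : forall a b : R, a * b = 0 -> a = 0 \/ b = 0.
Hypothesis R_nontriv : (1 : R) != 0.
Hypothesis pi_graded : forall w p, homogS q w p -> G w (pi p).
Hypothesis pi_minimal : forall p, pi p = 0 -> in_irrel_sq p.
Hypothesis pi_surj : forall y : R, exists p, pi p = y.
Hypothesis R0 : forall x : R, G 0 x -> exists c : F, x = c%:A.
Local Notation S := {mpoly F[r]}.

Lemma mpolyX_neq0 m : ('X_[m] : S) != 0.
Proof. by rewrite -msupp_eq0 msuppX. Qed.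

Lemma weightS_X m : weightS F q (mdegK q m).
Proof. by exists 'X_[m]; split; [apply: homogSX | apply: mpolyX_neq0]. Qed.

Lemma weightS_G u : weightS F q u -> weight G u.
Proof.
move=> [p [hp nz]]; move: nz; rewrite -msupp_eq0.
case e: (msupp p) => [|m s] // _.
have mp : m \in msupp p by rewrite e mem_head.
exists (pi 'X_[m]); split; last exact: (piXm_neq0 R_integral R_nontriv pi_minimal).
by rewrite -(hp m mp); apply: pi_graded; apply: homogSX.
Qed.

Lemma G_weightS u : weight G u -> weightS F q u.
Proof.
move=> [x [Gx nz]]; have [p pp] := pi_surj x.
have [pu [hu eu]] := homog_comp grG pi_graded Gx pp.
exists pu; split => //; apply/eqP => e; move: nz; by rewrite -eu e raddf0 eqxx.
Qed.

Lemma lift_exists (phi : R -> R) (psi : K -> K) : isrm phi ->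
  {morph psi : x y / x + y} -> (forall w x, G w x -> G (psi w) (phi x)) ->
  exists Phi : S -> S, isrm Phi /\ (forall v p, homogS q v p -> homogS q (psi v) (Phi p))
    /\ (forall p, pi (Phi p) = phi (pi p)).
Proof.
move=> hphi psiD hG.
have psi0 : psi 0 = 0 by apply: (@addrI _ (psi 0)); rewrite -psiD !addr0.
have ex i : exists f : S, homogS q (psi (q i)) f /\ pi f = phi (pi 'X_i).
  have Gi : G (psi (q i)) (phi (pi 'X_i)).
    by apply: hG; apply: pi_graded; rewrite -(mdegKU q i); apply: homogSX.
  have [p pp] := pi_surj (phi (pi 'X_i)).
  have [pu [h1 h2]] := homog_comp grG pi_graded Gi pp.
  by exists pu.
pose f i := proj1_sig (@constructive_indefinite_description _ _ (ex i)).
have fP i : homogS q (psi (q i)) (f i) /\ pi (f i) = phi (pi 'X_i).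
  exact: (proj2_sig (@constructive_indefinite_description _ _ (ex i))).
pose t := [tuple f i | i < r].
exists (fun p => p \mPo t); split; [|split].
- split; [|split; [|split]].
  + exact: comp_mpolyD.
  + by move=> x y; rewrite rmorphM.
  + exact: comp_mpoly1.
  + by move=> c x; rewrite comp_mpolyZ.
- move=> v p hp; rewrite comp_mpolyEX big_seq.
  apply: homogS_sum => m /hp <-; apply: homogSZ.
  have psiMn x k : psi (x *+ k) = psi x *+ k.
    by elim: k => [|k ih]; rewrite ?mulr0n ?psi0 // !mulrS psiD ih.
  rewrite comp_mpolyX /mdegK (big_morph psi psiD psi0).
  under eq_bigr do rewrite psiMn.
  apply: (big_ind2 (fun w (p : S) => homogS q w p)).
  + exact: homogS1.
  + by move=> w1 p1 w2 p2; apply: homogSM.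
  + by move=> i _; rewrite tnth_mktuple; apply: homogSXn; apply: (fP i).1.
- move=> p; have hpi := isrm_lr pi.
  rewrite comp_mpolyEX [in RHS](mpolyE p) !(isrm_sum hpi) (isrm_sum hphi).
  apply: eq_bigr => m _; rewrite !hpi.2.2.2 hphi.2.2.2; congr (_ *: _).
  rewrite comp_mpolyX mpolyXE_id !(isrm_prod hpi) (isrm_prod hphi).
  apply: eq_bigr => i _; rewrite !(isrmXn hpi) (isrmXn hphi) tnth_mktuple.
  by rewrite (fP i).2.
Qed.

Lemma homogS_Xi i : homogS q (q i) ('X_i : S).
Proof. by rewrite -[q i](mdegKU q i); apply: homogSX. Qed.

Lemma theta_diff (Phi Phi' : S -> S) : isrm Phi -> isrm Phi' ->
  (forall i, homogS q (q i) (Phi' (Phi 'X_i))) ->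
  (forall i, pi (Phi' (Phi 'X_i)) = pi 'X_i) ->
  forall w p, Icomp q (fun p => pi p = 0) w p ->
  Ilt q (fun p => pi p = 0) w (Phi' (Phi p) - p).
Proof.
move=> hPhi hPhi' hThX piThX w p [Ip hp].
have hTh := isrm_comp hPhi hPhi'.
pose Th := Phi' \o Phi.
have hpi := isrm_lr pi.
have e : Phi' (Phi p) = \sum_(m <- msupp p) p@_m *: Th 'X_[m].
  rewrite {1}[p]mpolyE (isrm_sum hPhi) (isrm_sum hPhi'); apply: eq_bigr => m _.
  by rewrite hPhi.2.2.2 hPhi'.2.2.2.
rewrite e [X in _ - X]mpolyE -sumrB big_seq; apply: Ilt_sum => m hm.
rewrite -scalerBr; apply: IltZ.
pose P a := Ilt q (fun p => pi p = 0) w (Th a - a).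
have P1 : P 1 by rewrite /P /Th hTh.2.2.1 subrr; apply: Ilt0.
have PM a b : P a -> P b -> P (a * b).
  rewrite /P /Th hTh.2.1 => ha hb.
  have -> : Th a * Th b - a * b = Th a * (Th b - b) + (Th a - a) * b.
    by rewrite mulrBr mulrBl addrA subrK.
  by apply: IltD; [apply: IltM | rewrite mulrC; apply: IltM].
have hmw : mdegK q m = w by apply: hp.
have nzm : p@_m != 0 by rewrite -mcoeff_msupp.
have key i : m i != 0%N -> P 'X_i.
  move=> mi; pose m' := (m - U_(i))%MM.
  have em : m = (m' + U_(i))%MM by rewrite submK // lep1mP.
  have dm' : mdegK q m' = w - q i by rewrite -hmw em mdegKD mdegKU addrK.
  apply: (@Ilt_gen _ _ _ _ _ _ (q i)); last first.
    split; first by rewrite /Th /= (isrmB hpi) piThX subrr.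
    by apply: homogSB; [apply: hThX | apply: homogS_Xi].
  split; first by rewrite /leS -dm'; apply: weightS_X.
  move=> eqi; have d0 : mdegK q m' = 0 by rewrite dm' eqi subrr.
  have nz' : m' != 0%MM.
    apply/eqP => m0; move: nzm; rewrite em m0 add0m.
    by rewrite (irrel_coef (pi_minimal Ip)) ?mdeg1 ?eqxx.
  have G0m : G 0 (pi 'X_[m']) by rewrite -d0; apply: pi_graded; apply: homogSX.
  have [c ec] := R0 G0m.
  have It : pi ('X_[m'] - c%:MP : S) = 0.
    rewrite (isrmB hpi) ec -[c%:MP]mulr1 mul_mpolyC hpi.2.2.2 hpi.2.2.1.
    by rewrite subrr.
  have := irrel_coef (m := 0%MM) (pi_minimal It); rewrite mdeg0 => /(_ isT).
  rewrite mcoeffB mcoeffX mcoeffC (negPf nz') eqxx mulr1 sub0r => /eqP.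
  rewrite oppr_eq0 => /eqP c0.
  by move: (@piXm_neq0 _ _ _ _ R_integral R_nontriv pi_minimal m'); rewrite ec c0 scale0r eqxx.
rewrite mpolyXE_id; change (P (\prod_(i < r) 'X_i ^+ m i)); apply: (big_ind P) => //.
move=> i _; case: (eqVneq (m i) 0%N) => [->|mi]; first by rewrite expr0.
elim: (m i) => [|k ih]; first by rewrite expr0.
by rewrite exprS; apply: PM => //; apply: key.
Qed.

Lemma lt_pres (phi : R -> R) (psi : K -> K) : isrm phi -> injective phi ->
  {morph psi : x y / x + y} -> injective psi ->
  (forall w x, G w x -> G (psi w) (phi x)) ->
  forall v w, ltS F q v w -> ltS F q (psi v) (psi w).
Proof.
move=> hphi iphi psiD ipsi hG v w [hle hne]; split; last first.
  by move=> /ipsi.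
rewrite /leS; have -> : psi w - psi v = psi (w - v).
  by apply/eqP; rewrite subr_eq -psiD subrK.
apply: G_weightS; have [x [Gx nx]] := weightS_G hle.
exists (phi x); split; first exact: hG.
apply: contra nx => /eqP e; apply/eqP; apply: iphi; by rewrite e (isrm0 hphi).
Qed.

Lemma omega_transfer (phi1 phi2 : R -> R) (psi1 psi2 : K -> K) :
  isrm phi1 -> isrm phi2 -> cancel phi1 phi2 -> cancel phi2 phi1 ->
  {morph psi1 : x y / x + y} -> {morph psi2 : x y / x + y} ->
  cancel psi1 psi2 -> cancel psi2 psi1 ->
  (forall w x, G w x -> G (psi1 w) (phi1 x)) ->
  (forall w x, G w x -> G (psi2 w) (phi2 x)) ->
  forall w, OmegaI q (fun p => pi p = 0) w -> OmegaI q (fun p => pi p = 0) (psi1 w).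
Proof.
move=> h1 h2 c12 c21 psi1D psi2D d12 d21 G1 G2 w [p [[Ip hp] nI]].
have [Phi1 [hP1 [hom1 pi1]]] := lift_exists h1 psi1D G1.
have [Phi2 [hP2 [hom2 pi2]]] := lift_exists h2 psi2D G2.
exists (Phi1 p); split.
  by split; [rewrite pi1 Ip (isrm0 h1) | apply: hom1].
move=> hI.
have hI2 : Ilt q (fun p => pi p = 0) w (Phi2 (Phi1 p)).
  rewrite -(d12 w); apply: (Ilt_map hP2) hI.
  - apply: lt_pres h2 _ psi2D _ G2; [exact: can_inj c21 | exact: can_inj d21].
  - exact: hom2.
  - by move=> p0 /= e; rewrite pi2 e (isrm0 h2).
have hd := theta_diff hP1 hP2 _ _ (conj Ip hp).
apply: nI; have -> : p = Phi2 (Phi1 p) - (Phi2 (Phi1 p) - p) by rewrite subKr.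
apply: IltB => //; apply: hd.
- by move=> i; rewrite -{1}(d12 (q i)); apply: hom2; apply: hom1; apply: homogS_Xi.
- by move=> i; rewrite pi2 pi1 c12.
Qed.

End Main.

Theorem proposition2p6
  (F : closedFieldType) (charF0 : [pchar F] =i pred0)
  (K : zmodType) (fgK : fingen_group K)
  (R : comAlgType F)
  (R_nontriv : (1 : R) != 0)
  (R_integral : forall a b : R, a * b = 0 -> a = 0 \/ b = 0)
  (G : K -> R -> Prop) (grG : is_grading G)
  (effG : effective_grading G) (ptdG : pointed_grading G)
  (r : nat) (q : 'I_r -> K)
  (pi : {lrmorphism {mpoly F[r]} -> R})
  (pi_graded : forall w p, homogS q w p -> G w (pi p))
  (pi_surj : forall y : R, exists p, pi p = y)
  (pi_minimal : forall p, pi p = 0 -> in_irrel_sq p)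
  (phi : {lrmorphism R -> R}) (phi_bij : bijective phi)
  (psi : {additive K -> K}) (psi_bij : bijective psi)
  (phi_psi_graded : forall w x, G w x -> G (psi w) (phi x))
  (phi_psi_onto : forall w y, G (psi w) y -> exists x, G w x /\ phi x = y) :
  let I := fun p => pi p = 0 in
  (forall w, OmegaI q I w -> OmegaI q I (psi w)) /\
  (forall w, OmegaI q I w -> exists w', OmegaI q I w' /\ psi w' = w).
Proof.
move=> I.
have R0 := ptdG.1.
case: phi_bij => phi' c1 c2.
case: psi_bij => psi' d1 d2.
have h1 : isrm phi by apply: isrm_lr.
have h2 : isrm phi' by apply: (isrm_inv h1).
have psiD : {morph psi : x y / x + y} by move=> x y; rewrite raddfD.
have psi'D : {morph psi' : x y / x + y}.
  by move=> x y; apply: (can_inj d1); rewrite psiD !d2.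
have G2 : forall w y, G w y -> G (psi' w) (phi' y).
  move=> w y; rewrite -{1}(d2 w) => /phi_psi_onto [x [Gx <-]].
  by rewrite c1.
have T := omega_transfer grG R_integral R_nontriv pi_graded pi_minimal pi_surj R0.
split.
  exact: (T _ _ _ _ h1 h2 c1 c2 psiD psi'D d1 d2 phi_psi_graded G2).
move=> w hw; exists (psi' w); split; last exact: d2.
exact: (T _ _ _ _ h2 h1 c2 c1 psi'D psiD d2 d1 G2 phi_psi_graded).
Qed.
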